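(* Let $\varkappa_+,\varkappa_-$ be nonnegative integers with $N=\varkappa_++\varkappa_-\ge1$, and let $x\in\mathbb{C}\setminus\mathbb{Z}$. Then $$\sum_{(c'_1,\dots,c'_N)}\ \prod_{i=1}^{N}\frac{1}{x+c'_i}=\frac{\binom{\varkappa_++\varkappa_-}{\varkappa_+}}{\prod_{i=1}^{\varkappa_+}(x+i)\prod_{j=1}^{\varkappa_-}(x-j)},$$ where the sum runs over all integer sequences $(c'_1,\dots,c'_N)$ such that, with $c'_0=0$, $|c'_{i+1}-c'_i|=1$ for $i=0,\dots,N-1$ and $c'_N=\varkappa_+-\varkappa_-$. *)

(* Defs.v *)
From HB Require Import structures.
From mathcomp Require Import all_boot all_order all_algebra.
From mathcomp Require Import complex.
From mathcomp Require Import reals.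
Set Implicit Arguments. Unset Strict Implicit. Unset Printing Implicit Defensive.
Import Order.TTheory GRing.Theory Num.Theory.
Local Open Scope ring_scope.

(* A path of length N with unit steps is encoded by its step vector
   s : {ffun 'I_N -> bool} (true = +1, false = -1).
   [pathpos s i] is c'_i = sum of the first i steps, so c'_0 = 0 and
   |c'_{i+1} - c'_i| = 1; this is a bijection between step vectors and
   integer sequences (c'_1,...,c'_N) with c'_0 = 0 and unit steps. *)
Definition pathpos (N : nat) (s : {ffun 'I_N -> bool}) (i : nat) : int :=
  \sum_(j < N | (j < i)%N) (if s j then 1 else -1).

(* Main.v *)
Require Import Defs.
From HB Require Import structures.
From mathcomp Require Import all_boot all_order all_algebra.
From mathcomp Require Import complex.
From mathcomp Require Import reals.
From mathcomp Require Import ring zify.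
Set Implicit Arguments. Unset Strict Implicit. Unset Printing Implicit Defensive.
Import Order.TTheory GRing.Theory Num.Theory.
Local Open Scope ring_scope.

Definition ext n (bg : bool * {ffun 'I_n -> bool}) : {ffun 'I_n.+1 -> bool} :=
  [ffun i : 'I_n.+1 => if unlift ord_max i is Some j then bg.2 j else bg.1].
Definition res n (s : {ffun 'I_n.+1 -> bool}) : bool * {ffun 'I_n -> bool} :=
  (s ord_max, [ffun j : 'I_n => s (lift ord_max j)]).

Lemma ext_bij n : bijective (@ext n).
Proof.
exists (@res n).
  case=> b g; rewrite /res /ext /= ffunE unlift_none; congr pair.
  by apply/ffunP=> j; rewrite !ffunE liftK.
move=> s; apply/ffunP=> i; rewrite /res /ext ffunE /=.
by case: unliftP => [j ->|->]; rewrite ?ffunE.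
Qed.

Lemma ext_widen n b g (j : 'I_n) H : ext (b, g) (widen_ord H j) = g j.
Proof.
have -> : widen_ord H j = lift ord_max j by apply/val_inj; rewrite /= /bump leqNgt ltn_ord.
by rewrite ffunE liftK.
Qed.

Lemma pathpos_ext n b (g : {ffun 'I_n -> bool}) k : (k <= n)%N -> pathpos (ext (b, g)) k = pathpos g k.
Proof.
move=> kn; rewrite /pathpos !(big_mkcond (fun j : 'I_ _ => (j < k)%N)) big_ord_recr /=.
rewrite ltnNge kn addr0; apply: eq_bigr => j _; by rewrite ext_widen.
Qed.

Lemma pathpos_ext_last n b (g : {ffun 'I_n -> bool}) :
  pathpos (ext (b, g)) n.+1 = pathpos g n + (if b then 1 else -1).
Proof.
rewrite /pathpos !(big_mkcond (fun j : 'I_ _ => (j < _)%N)) big_ord_recr /= ltnSn.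
congr (_ + _); first   by apply: eq_bigr => j _; rewrite ext_widen (ltn_ord j) ltnS ltnW.
rewrite ffunE; case: unliftP => [j /(congr1 val) /= e|//].
by move: (ltn_ord j) e; rewrite /bump /=; case: (leqP n j) => /= *; lia.
Qed.

Lemma alg (F : fieldType) (x a c1 c2 P M : F) : a != 0 -> x + P != 0 -> x - M != 0 ->
  x + (P - M) != 0 -> P * c2 = M * c1 ->
  (x + (P - M))^-1 * (c1 / (a * (x - M)) + c2 / (a * (x + P))) =
  (c2 + c1) / (a * (x - M) * (x + P)).
Proof.
move=> hd hp hm he key.
have E : c1 * (x + P) + c2 * (x - M) = (c2 + c1) * (x + (P - M)).
  transitivity ((c2 + c1) * (x + (P - M)) + (M * c1 - P * c2)); last by rewrite key subrr addr0.
  ring.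
transitivity ((x + (P - M))^-1 * ((c1 * (x + P) + c2 * (x - M)) / (a * (x - M) * (x + P)))).
  by congr (_ * _); field; rewrite hd hm hp.
rewrite E; field; by rewrite hd hm hp he.
Qed.

Section Main.
Variable F : fieldType.
Variable x : F.
Hypothesis hx : forall z : int, x != z%:~R.

Definition S n (e : int) := \sum_(g : {ffun 'I_n -> bool} | pathpos g n == e)
   \prod_(i < n) (x + (pathpos g i.+1)%:~R)^-1.
Definition D p m := (\prod_(i < p) (x + (i.+1)%:R)) * (\prod_(j < m) (x - (j.+1)%:R)).

Lemma nz (k : int) : x + k%:~R != 0.
Proof. apply: contra (hx (- k)); rewrite addr_eq0 => /eqP ->; by rewrite mulrNz. Qed.
Lemma nzP (k : nat) : x + k%:R != 0.
Proof. exact: (nz k). Qed.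
Lemma nzM (k : nat) : x - k%:R != 0.
Proof. have := nz (- (k%:Z)); by rewrite mulrNz. Qed.
Lemma nzD p m : D p m != 0.
Proof. by rewrite mulf_neq0 //; apply/prodf_neq0 => i _; rewrite ?nzP ?nzM. Qed.
Lemma DSp p m : D p.+1 m = D p m * (x + p.+1%:R).
Proof. by rewrite /D big_ord_recr /= mulrAC. Qed.
Lemma DSm p m : D p m.+1 = D p m * (x - m.+1%:R).
Proof. by rewrite /D big_ord_recr /= mulrA. Qed.

Lemma Sstep n e : S n.+1 e = (x + e%:~R)^-1 * (S n (e - 1) + S n (e + 1)).
Proof.
rewrite /S (reindex (@ext n)); last by apply: onW_bij; apply: ext_bij.
rewrite (eq_bigr (fun bg => (x + e%:~R)^-1 * \prod_(i < n) (x + (pathpos bg.2 i.+1)%:~R)^-1)); last first.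
  case=> b g /eqP He; rewrite big_ord_recr /= He mulrC; congr (_ * _).
  by apply: eq_bigr => i _; rewrite pathpos_ext //; exact: ltn_ord.
rewrite -big_distrr /=; congr (_ * _).
transitivity (\sum_(b : bool) \sum_(g : {ffun 'I_n -> bool})
   (if pathpos (ext (b, g)) n.+1 == e then \prod_(i < n) (x + (pathpos g i.+1)%:~R)^-1 else 0)).
  by rewrite pair_bigA big_mkcond /=; apply: eq_bigr => -[b g] _.
rewrite big_bool /=.
congr (_ + _); rewrite [RHS]big_mkcond; apply: eq_bigr => g _; rewrite pathpos_ext_last /=.
  have -> : (pathpos g n + 1 == e) = (pathpos g n == e - 1) by apply/eqP/eqP => [<-|->]; rewrite ?addrK ?subrK.
  by [].
have -> : (pathpos g n + -1 == e) = (pathpos g n == e + 1) by apply/eqP/eqP => [<-|->]; rewrite ?addrK ?addrNK ?subrK.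
by [].
Qed.

Lemma bound n (g : {ffun 'I_n -> bool}) k : (- (n%:Z) <= pathpos g k <= n%:Z)%R.
Proof.
rewrite /pathpos big_mkcond; apply/andP; split.
  have -> : - (n%:Z) = \sum_(j < n) (-1 : int). rewrite sumrN sumr_const card_ord; lia.
  by apply: ler_sum => j _; case: (_ < _)%N; case: (g j).
have -> : n%:Z = \sum_(j < n) (1 : int) by rewrite sumr_const card_ord; lia.
by apply: ler_sum => j _; case: (_ < _)%N; case: (g j).
Qed.

Lemma Szero n e : (e < - (n%:Z))%R \/ (n%:Z < e)%R -> S n e = 0.
Proof.
move=> he; rewrite /S big_pred0 // => g; apply/negbTE/eqP => Hg.
move: (bound g n); rewrite Hg => /andP[h1 h2]; lia.
Qed.

Lemma mainS n p m : (p + m)%N = n -> S n (p%:Z - m%:Z) = 'C(n, p)%:R / D p m.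
Proof.
elim: n p m => [|n IH] p m.
  case: p => [|p] //; case: m => [|m] // _.
  rewrite /S /D !big_ord0 mulr1 bin0 divr1 (eq_bigl xpredT); last by move=> g; rewrite /pathpos big_ord0.
  rewrite (eq_bigr (fun _ => 1)); last by move=> g _; rewrite big_ord0.
  by rewrite sumr_const card_ffun card_ord.
move=> hpm; rewrite Sstep.
case: p hpm => [|p] hpm; case: m hpm => [|m] hpm //.
- move: hpm; rewrite add0n => -[->] {m}.
  rewrite (Szero (n := n)); last by left; lia.
  have -> : (0%:Z - n.+1%:Z + 1) = 0%:Z - n%:Z by lia.
  rewrite IH // DSm !bin0 add0r.
  have -> : (x + (- (n.+1%:Z))%:~R) = x - n.+1%:R by rewrite mulrNz.
  by field; rewrite -mulrS nzM nzD.
- move: hpm; rewrite addn0 => -[->] {p}.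
  rewrite [S n (_ + 1)](Szero (n := n)); last by right; lia.
  have -> : (n.+1%:Z - 0%:Z - 1) = n%:Z - 0%:Z by lia.
  rewrite IH ?addn0 // DSp !binn addr0.
  have -> : (x + (n.+1%:Z)%:~R) = x + n.+1%:R by [].
  by field; rewrite -mulrS nzP nzD.
- have h1 : (p + m.+1)%N = n by lia.
  have h2 : (p.+1 + m)%N = n by lia.
  have -> : (p.+1%:Z - m.+1%:Z - 1) = p%:Z - m.+1%:Z by lia.
  have -> : (p.+1%:Z - m.+1%:Z + 1) = p.+1%:Z - m%:Z by lia.
  rewrite IH // IH // (DSp p m.+1) (DSm p m) (DSp p m) binS natrD.
  have -> : (x + (p.+1%:Z - m.+1%:Z)%:~R) = x + (p.+1%:R - m.+1%:R) by rewrite mulrzBr.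
  apply: alg; rewrite ?nzD ?nzP ?nzM //.
    by have := nz (p.+1%:Z - m.+1%:Z); rewrite mulrzBr.
  by rewrite -!natrM mul_bin_left; congr (_ * _)%:R; lia.
Qed.
End Main.

From mathcomp Require Import complex.
From mathcomp Require Import reals.
Local Open Scope complex_scope.

Theorem mainTheorem11 (R : realType) (kp km : nat) (x : R[i])
  (hN : (1 <= kp + km)%N)
  (hx : forall z : int, x != z%:~R) :
  \sum_(s : {ffun 'I_(kp + km) -> bool} |
          pathpos s (kp + km) == (kp%:Z - km%:Z))
     \prod_(i < kp + km) (x + (pathpos s i.+1)%:~R)^-1
  = ('C(kp + km, kp))%:R /
      ((\prod_(i < kp) (x + (i.+1)%:R)) * (\prod_(j < km) (x - (j.+1)%:R))).
Proof. have := mainS hx (erefl (kp + km)%N); rewrite /S /D; exact. Qed.
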